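(* Let $d\ge1$, $n\ge2$ be integers, $\kappa_d$ the volume of the $d$-dimensional unit ball, $V\ge0$, $c\in(0,\infty)$, $-d/2<\tau_1<\dots<\tau_n$ reals, $a_i=\tau_i+d$, $x_i=\tau_i+d/2$. Let $\Sigma_n^{\mathrm{sb}}$ have entries $\frac{Vd\kappa_d}{2(x_i+x_j)}$, $\Sigma_n^{\mathrm{sp}}$ entries $\frac{Vd^2\kappa_d^2}{a_ia_j}$, and $\Sigma_n=\Sigma_n^{\mathrm{sb}}+c\Sigma_n^{\mathrm{sp}}$ if $c\le1$, $\Sigma_n=\frac1c\Sigma_n^{\mathrm{sb}}+\Sigma_n^{\mathrm{sp}}$ if $c>1$. Define $$D=\Bigg(1+\sum_{j=1}^n\frac{cd\kappa_d}{a_j}\Bigg(\frac{4x_j\prod_{k\in[n]\setminus\{j\}}(x_k+x_j)^2}{a_j\prod_{k\in[n]\setminus\{j\}}(x_k-x_j)^2}-\sum_{i\in[n]\setminus\{j\}}\frac{8x_ix_j(x_i+x_j)\prod_{l\in[n]\setminus\{i,j\},\,k\in\{i,j\}}(x_k+x_l)}{a_i(x_j-x_i)^2\prod_{l\in[n]\setminus\{i,j\},\,k\in\{i,j\}}(x_k-x_l)}\Bigg)\Bigg)\frac{\prod_{1\le i<j\le n}(x_i-x_j)^2}{\prod_{1\le i,j\le n}(x_i+x_j)}.$$ Then $\det(\Sigma_n)=D\big(\frac{Vd\kappa_d}{2}\big)^n$ for $c\in(0,1]$ and $\det(\Sigma_n)=D\big(\frac{Vd\kappa_d}{2c}\big)^n$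 for $c\in(1,\infty)$.
   Context: $\Sigma_n$ is the asymptotic covariance matrix of normalized length power functionals in the critical regime $t\delta_t^d\to c$. $[n]=\{1,\dots,n\}$; products over ''$l\in A,\,k\in\{i,j\}$'' run over all such pairs $(l,k)$. *)

(* Defs.v *)
From mathcomp Require Import all_boot all_order all_algebra.
From mathcomp Require Import reals trigo.
Set Implicit Arguments. Unset Strict Implicit. Unset Printing Implicit Defensive.
Import Order.TTheory GRing.Theory Num.Theory.
Local Open Scope ring_scope.

(* kappa_d : volume of the d-dimensional unit ball, via the standard
   recursion kappa_0 = 1, kappa_1 = 2, kappa_{d+2} = 2 pi/(d+2) kappa_d
   (equivalently pi^(d/2) / Gamma(d/2+1)). *)
Fixpoint ball_vol {R : realType} (d : nat) : R :=
  match d with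
  | 0 => 1
  | 1 => 2
  | k.+2 => (2 * pi / (k.+2)%:R) * ball_vol k
  end.

Section Defs.
Variables (R : realType) (d n : nat) (V c : R) (tau : 'I_n -> R).

Definition a_ (i : 'I_n) : R := tau i + d%:R.
Definition x_ (i : 'I_n) : R := tau i + d%:R / 2.

Definition Sigma_sb : 'M[R]_n :=
  \matrix_(i, j) (V * d%:R * ball_vol d / (2 * (x_ i + x_ j))).
Definition Sigma_sp : 'M[R]_n :=
  \matrix_(i, j) (V * d%:R ^+ 2 * ball_vol d ^+ 2 / (a_ i * a_ j)).

Definition Sigma : 'M[R]_n :=
  if c <= 1 then Sigma_sb + c *: Sigma_sp
  else c^-1 *: Sigma_sb + Sigma_sp.

Definition Dconst : R :=
  (1 + \sum_(j < n)
     (c * d%:R * ball_vol d / a_ j) *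
     ( (4 * x_ j * (\prod_(k < n | k != j) (x_ k + x_ j) ^+ 2))
         / (a_ j * (\prod_(k < n | k != j) (x_ k - x_ j) ^+ 2))
       - \sum_(i < n | i != j)
           (8 * x_ i * x_ j * (x_ i + x_ j)
              * (\prod_(l < n | (l != i) && (l != j)) ((x_ i + x_ l) * (x_ j + x_ l))))
           / (a_ i * (x_ j - x_ i) ^+ 2
              * (\prod_(l < n | (l != i) && (l != j)) ((x_ i - x_ l) * (x_ j - x_ l))))))
  * ((\prod_(i < n) \prod_(j < n | (i < j)%N) (x_ i - x_ j) ^+ 2)
     / (\prod_(i < n) \prod_(j < n) (x_ i + x_ j))).
End Defs.

(* Main.v *)
From mathcomp Require Import all_boot all_order all_algebra.
From mathcomp Require Import reals trigo.
From mathcomp Require Import zify ring lra.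
Require Import Defs.
Set Implicit Arguments. Unset Strict Implicit. Unset Printing Implicit Defensive.
Import Order.TTheory GRing.Theory Num.Theory.
Local Open Scope ring_scope.

Section Alg.
Variable R : fieldType.

Lemma det_schur n (A : 'M[R]_(1 + n)) : ulsubmx A 0 0 != 0 ->
  \det A = ulsubmx A 0 0 *
    \det (drsubmx A - (ulsubmx A 0 0)^-1 *: (dlsubmx A *m ursubmx A)).
Proof.
move=> Ha.
rewrite -{1}(submxK A).
set a := ulsubmx A; set r := ursubmx A; set c := dlsubmx A; set B := drsubmx A.
have ea : a = (a 0 0)%:M by apply: mx11_scalar.
have -> : block_mx a r c B = block_mx 1 0 ((a 0 0)^-1 *: c) 1 *m
     block_mx a r 0 (B - (a 0 0)^-1 *: (c *m r)).
  rewrite mulmx_block !mul1mx !mul0mx !addr0 ?mulmx0 ?add0r ?mul1mx ?mulmx1.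
  idtac.
  congr block_mx; last first.
  - by rewrite -scalemxAl addrC subrK.
  - by rewrite -scalemxAl [in c *m a]ea mul_mx_scalar scalerA mulVf // scale1r.
by rewrite det_mulmx det_lblock det_ublock !det1 mul1r mul1r det_mx11.
Qed.


Definition Vp n (x : nat -> R) := \prod_(i < n) \prod_(j < n | (i < j)%N) (x j - x i).
Definition Hp n (x y : nat -> R) := \prod_(i < n) \prod_(j < n) (x i + y j).
Definition cmx n (x y : nat -> R) : 'M[R]_n := \matrix_(i, j) (x i + y j)^-1.

Lemma ltn_lift m (j : 'I_m.+1) (a b : 'I_m) : (lift j a < lift j b)%N = (a < b)%N.
Proof. by rewrite /= !ltnNge leq_bump2. Qed.

Lemma ltn_bump h a b : (bump h a < bump h b)%N = (a < b)%N.
Proof. by rewrite !ltnNge leq_bump2. Qed.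

Lemma ltn_bl m (j : 'I_m.+1) a (b : 'I_m) : (bump j a < lift j b)%N = (a < b)%N.
Proof. exact: ltn_bump. Qed.

Lemma V_lift m x (j : 'I_m.+1) : Vp m.+1 x = Vp m (fun a => x (bump j a)) *
  (\prod_(a < m.+1 | (a < j)%N) (x j - x a)) * \prod_(b < m.+1 | (j < b)%N) (x b - x j).
Proof.
rewrite /Vp (bigD1_ord j) //= mulrC; congr (_ * _).
under eq_bigr => a _ do rewrite big_mkcond (bigD1_ord j) //=.
rewrite big_split /= mulrC; congr (_ * _).
  apply: eq_bigr => a _; rewrite [RHS]big_mkcond; apply: eq_bigr => b _.
  by rewrite ltn_bl.
by rewrite [RHS]big_mkcond (bigD1_ord j) //= ltnn mul1r.
Qed.

Lemma H_lift m x y (i j : 'I_m.+1) : Hp m.+1 x y * (x j + y i) =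
  Hp m (fun a => x (bump j a)) (fun b => y (bump i b)) *
  (\prod_(b < m.+1) (x j + y b)) * \prod_(a < m.+1) (x a + y i).
Proof.
rewrite /Hp (bigD1_ord j) //=.
rewrite [X in _ * X * (x j + y i)](eq_bigr (fun a : 'I_m => (x (bump j a) + y i) *
    \prod_(b < m) (x (bump j a) + y (bump i b)))); last first.
  by move=> a _; rewrite (bigD1_ord i).
rewrite big_split /= [X in _ = _ * X](bigD1_ord j) //=.
ring.
Qed.

Lemma det_scale n (al be : 'I_n -> R) (B : 'M[R]_n) :
  \det (\matrix_(i, j) (al i * B i j * be j)) =
  (\prod_i al i) * (\prod_j be j) * \det B.
Proof.
have -> : \matrix_(i, j) (al i * B i j * be j) =
    diag_mx (\row_i al i) *m B *m diag_mx (\row_j be j).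
  by apply/matrixP => i j; rewrite mul_diag_mx mul_mx_diag !mxE.
by rewrite !det_mulmx !det_diag; under eq_bigr do rewrite mxE;
  under [X in _ * _ * X]eq_bigr do rewrite mxE; ring.
Qed.

Lemma cauchy n x y : (forall a b, x a + y b != 0) ->
  \det (cmx n x y) = Vp n x * Vp n y / Hp n x y.
Proof.
elim: n x y => [|n IH] x y Hxy.
  by rewrite det_mx00 /Vp /Hp !big_ord0 mulr1 divr1.
have H0 : ulsubmx (cmx n.+1 x y : 'M_(1 + n)) 0 0 = (x 0%N + y 0%N)^-1.
  by rewrite !mxE.
rewrite (det_schur (A := cmx n.+1 x y)) H0 ?invr_eq0 // invrK.
have -> : drsubmx (cmx n.+1 x y : 'M_(1 + n)) - (x 0%N + y 0%N) *:
   (dlsubmx (cmx n.+1 x y : 'M_(1 + n)) *m ursubmx (cmx n.+1 x y : 'M_(1 + n))) =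
   \matrix_(i, j) (((x i.+1 - x 0%N) / (x i.+1 + y 0%N)) *
      cmx n (fun a => x a.+1) (fun b => y b.+1) i j *
      ((y j.+1 - y 0%N) / (x 0%N + y j.+1))).
  apply/matrixP => i j; rewrite !mxE big_ord1 !mxE /=.
  by rewrite !add1n; field; rewrite ?Hxy.
rewrite det_scale IH // !prodf_div.
have HH := @H_lift n x y ord0 ord0.
rewrite (V_lift x ord0) (V_lift y ord0).
have E0 : forall z : nat -> R, \prod_(a < n.+1 | (a < @ord0 n)%N) (z (@ord0 n) - z a) = 1.
  by move=> z; apply: big_pred0 => a.
rewrite !E0 !mulr1.
rewrite !big_ord_recl in HH.
have Px : forall z : nat -> R, \prod_(b < n.+1 | (@ord0 n < b)%N) (z b - z (@ord0 n)) =
   \prod_(i < n) (z i.+1 - z 0%N).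
  by move=> z; rewrite big_mkcond big_ord_recl /= mul1r.
rewrite !Px.
have Eb : forall z : nat -> R, (fun a : nat => z (bump (@ord0 n) a)) = (fun a => z a.+1) by [].
rewrite !Eb in HH *.
have Hx0 : x 0%N + y 0%N != 0 by [].
have HHp : forall m (u v : nat -> R), (forall a b, u a + v b != 0) -> Hp m u v != 0.
  move=> m u v Huv; rewrite /Hp prodf_seq_neq0; apply/allP => a _ /=.
  by rewrite prodf_seq_neq0; apply/allP => b _ /=.
have Hr : \prod_(i < n) (x 0%N + y i.+1) != 0 by rewrite prodf_seq_neq0; apply/allP => i _ /=.
have Hc : \prod_(i < n) (x i.+1 + y 0%N) != 0 by rewrite prodf_seq_neq0; apply/allP => i _ /=.
have Hn : Hp n (fun a => x a.+1) (fun b => y b.+1) != 0 by apply: HHp.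
have Hn1 : Hp n.+1 x y != 0 by apply: HHp.
have HH' : Hp n.+1 x y * (x 0%N + y 0%N) =
   Hp n (fun a : nat => x a.+1) (fun a : nat => y a.+1) *
   ((x 0%N + y 0%N) * \prod_(i < n) (x 0%N + y i.+1)) *
   ((x 0%N + y 0%N) * \prod_(i < n) (x i.+1 + y 0%N)) by exact: HH.
have -> : Hp n.+1 x y = Hp n (fun a : nat => x a.+1) (fun a : nat => y a.+1) *
   ((x 0%N + y 0%N) * \prod_(i < n) (x 0%N + y i.+1)) *
   ((x 0%N + y 0%N) * \prod_(i < n) (x i.+1 + y 0%N)) / (x 0%N + y 0%N).
  by rewrite -HH' mulfK.
by field; rewrite Hx0 Hr Hc Hn.
Qed.

Lemma det_rank1 n (A : 'M[R]_n) (p : 'cV[R]_n) (q : 'rV[R]_n) : \det A != 0 ->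
  \det (A + p *m q) = \det A + (q *m \adj A *m p) 0 0.
Proof.
move=> HA.
have E1 : block_mx 1 (-q) p A = block_mx 1 0 p 1 *m block_mx 1 (-q) 0 (A + p *m q) :> 'M_(1 + n).
  rewrite mulmx_block !mul1mx !mul0mx !addr0 ?mulmx0 ?add0r ?mul1mx ?mulmx1.
  by rewrite mulmxN addrCA addNr addr0.
have E2 : block_mx 1 (-q) p A *m block_mx (\det A)%:M 0 (- (\adj A *m p)) 1 =
    block_mx ((\det A)%:M + q *m \adj A *m p) (-q) 0 A :> 'M_(1 + n).
  rewrite mulmx_block ?mul1mx ?mul0mx ?mulmx0 ?add0r ?addr0 ?mulmx1 ?mul1mx.
  congr block_mx.
  - by rewrite mulNmx mulmxN opprK mulmxA.
  - by rewrite mulmxN mulmxA mul_mx_adj mul_scalar_mx mul_mx_scalar subrr.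
have := congr1 determinant E2.
rewrite det_mulmx E1 det_mulmx det_lblock det_ublock det_lblock det_ublock.
rewrite !det1 !mul1r det_scalar1 det_mx11 !mxE eqxx mulr1n => H.
apply: (mulIf HA); rewrite mulr1 in H; by rewrite H.
Qed.

Lemma prod_sign m (j : 'I_m.+1) :
  \prod_(b < m.+1 | (j < b)%N) (-1 : R) = (-1) ^+ (m - j).
Proof.
rewrite -(big_mkord (fun b => (j < b)%N) (fun _ => -1)).
rewrite (big_cat_nat (leq0n j.+1)) /=; last exact: ltn_ord j.
rewrite big_nat_cond big1 ?mul1r; last first.
  by move=> b /andP[/andP[_ hb] hj]; exfalso; lia.
rewrite -subSS -prodr_const_nat big_nat_cond [RHS]big_nat_cond.
by apply: eq_bigl => b; lia.
Qed.

Definition Qd m (x : nat -> R) (i : 'I_m.+1) := \prod_(a < m.+1 | a != i) (x i - x a).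
Definition Pd m (x : nat -> R) (i : 'I_m.+1) := \prod_(b < m.+1) (x b + x i).

Lemma Q_split m x (j : 'I_m.+1) : Qd x j = (-1) ^+ (m - j) *
  ((\prod_(a < m.+1 | (a < j)%N) (x j - x a)) * \prod_(b < m.+1 | (j < b)%N) (x b - x j)).
Proof.
rewrite /Qd (bigID (fun a : 'I_m.+1 => (a < j)%N)) /=.
rewrite mulrCA; congr (_ * _).
  by apply: eq_bigl => a; rewrite -(inj_eq val_inj) /=; lia.
rewrite -prod_sign -big_split /=.
apply: eq_big => a; first by rewrite -(inj_eq val_inj) /=; lia.
by move=> _; rewrite mulN1r opprB.
Qed.

Lemma Hp_neq0 m (u v : nat -> R) : (forall a b, u a + v b != 0) -> Hp m u v != 0.
Proof.
move=> Huv; rewrite /Hp prodf_seq_neq0; apply/allP => a _ /=.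
by rewrite prodf_seq_neq0; apply/allP => b _ /=.
Qed.

Lemma sign_rel m (i j : 'I_m.+1) :
  (-1) ^+ (j + i) = ((-1) ^+ (m - i) * (-1) ^+ (m - j) : R)^-1.
Proof.
have Hn : (-1) ^+ (m - i) * (-1) ^+ (m - j) != 0 :> R by rewrite mulf_neq0 ?signr_eq0.
apply: (mulIf Hn); rewrite mulVf // -!exprD.
have -> : (j + i + (m - i + (m - j)) = m * 2)%N.
  have := ltn_ord i; have := ltn_ord j; lia.
by rewrite exprM sqrr_sign.
Qed.

Lemma cof_cauchy m (x : nat -> R) (i j : 'I_m.+1) : (forall a b, x a + x b != 0) ->
  cofactor (cmx m.+1 x x) j i * ((x i + x j) * Qd x i * Qd x j) =
  \det (cmx m.+1 x x) * (Pd x i * Pd x j).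
Proof.
move=> Hs.
rewrite /cofactor.
have -> : row' j (col' i (cmx m.+1 x x)) =
    cmx m (fun a => x (bump j a)) (fun b => x (bump i b)).
  by apply/matrixP => a b; rewrite !mxE.
rewrite !cauchy //.
have Hl := H_lift x x i j.
rewrite {1}(V_lift x j) (V_lift x i) (Q_split x i) (Q_split x j) sign_rel.
have -> : Hp m.+1 x x = Hp m (fun a => x (bump j a)) (fun b => x (bump i b)) *
    (\prod_(b < m.+1) (x j + x b)) * (\prod_(a < m.+1) (x a + x i)) / (x j + x i).
  by rewrite -Hl mulfK.
have -> : \prod_(b < m.+1) (x j + x b) = Pd x j by apply: eq_bigr => b _; rewrite addrC.
have HPi : Pd x i != 0 by rewrite prodf_seq_neq0; apply/allP => b _ /=.
have HPj : Pd x j != 0 by rewrite prodf_seq_neq0; apply/allP => b _ /=.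
have Hm : Hp m (fun a => x (bump j a)) (fun b => x (bump i b)) != 0 by apply: Hp_neq0.
have Hij := Hs j i.
rewrite /Pd in HPi HPj *.
by field; rewrite Hij HPi HPj Hm !signr_eq0.
Qed.

End Alg.

Theorem theorem7p3 (R : realType) (d n : nat) (V c : R) (tau : 'I_n -> R) :
  (1 <= d)%N -> (2 <= n)%N -> 0 <= V -> 0 < c ->
  (forall i : 'I_n, - (d%:R / 2) < tau i) ->
  (forall i j : 'I_n, (i < j)%N -> tau i < tau j) ->
  (c <= 1 -> \det (Sigma d V c tau) =
               Dconst d c tau * (V * d%:R * ball_vol d / 2) ^+ n) /\
  (1 < c -> \det (Sigma d V c tau) =
               Dconst d c tau * (V * d%:R * ball_vol d / (2 * c)) ^+ n).
Proof.
move=> hd hn hV hc htau hmono.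
case: n tau hn htau hmono => [//|m] tau hn htau hmono.
pose X : nat -> R := fun k => x_ d tau (inord k).
have HX : forall i : 'I_m.+1, X i = x_ d tau i by move=> i; rewrite /X inord_val.
have xpos : forall i : 'I_m.+1, 0 < x_ d tau i.
  by move=> i; rewrite /x_; have := htau i; lra.
have Xpos : forall k, 0 < X k by move=> k; exact: xpos.
have Hs : forall a b, X a + X b != 0 by move=> a b; rewrite gt_eqF // addr_gt0.
have apos : forall i, 0 < a_ d tau i.
  move=> i; have := xpos i; rewrite /x_ /a_.
  have : 0 <= d%:R :> R by exact: ler0n.
  lra.
have xdist : forall i j : 'I_m.+1, i != j -> x_ d tau i - x_ d tau j != 0.
  move=> i j; rewrite -(inj_eq val_inj) /= neq_ltn => /orP[] h;
    have := hmono _ _ h; rewrite /x_ => h'; apply/eqP => E; lra.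
set x := x_ d tau in HX xpos xdist *.
set a := a_ d tau in apos *.
set kap := ball_vol d.
pose w i := (a i)^-1.
pose be := 2 * c * d%:R * kap.
pose p : 'cV[R]_m.+1 := \col_i (be * w i).
pose q : 'rV[R]_m.+1 := \row_j w j.
pose C := cmx m.+1 X X.
have detC : \det C = Vp m.+1 X * Vp m.+1 X / Hp m.+1 X X by apply: cauchy.
have Vne : Vp m.+1 X != 0.
  rewrite /Vp prodf_seq_neq0; apply/allP => i _ /=.
  rewrite prodf_seq_neq0; apply/allP => j _ /=; apply/implyP => hij.
  by rewrite !HX xdist // -(inj_eq val_inj) /= gtn_eqF.
have detCne : \det C != 0 by rewrite detC !mulf_neq0 ?invr_eq0 ?Hp_neq0.
have Qne : forall i : 'I_m.+1, Qd X i != 0.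
  move=> i; rewrite /Qd prodf_seq_neq0; apply/allP => k _ /=; apply/implyP => hk.
  by rewrite !HX xdist // eq_sym.
have cofE : forall i j : 'I_m.+1, cofactor C j i =
    \det C * (Pd X i * Pd X j) / ((X i + X j) * Qd X i * Qd X j).
  move=> i j; rewrite -(cof_cauchy i j Hs) mulfK //.
  by rewrite !mulf_neq0 ?Qne.
have Hne : forall i j : 'I_m.+1, x i + x j != 0 by move=> i j; rewrite -!HX.
have ane : forall i, a i != 0 by move=> i; rewrite gt_eqF.
have PdE : forall i : 'I_m.+1, Pd X i = \prod_(b < m.+1) (x b + x i).
  by move=> i; apply: eq_bigr => b _; rewrite !HX.
have PdE' : forall i : 'I_m.+1, Pd X i = \prod_(b < m.+1) (x i + x b).
  by move=> i; apply: eq_bigr => b _; rewrite !HX addrC.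
have prod2 : forall (F : 'I_m.+1 -> R) (i j : 'I_m.+1), i != j ->
    \prod_b F b = F i * F j * \prod_(b | (b != i) && (b != j)) F b.
  by move=> F i j hij; rewrite (bigD1 i) // (bigD1 j) 1?eq_sym //= mulrA.
have prod2' : forall (F : 'I_m.+1 -> R) (i j : 'I_m.+1), i != j ->
    \prod_b F b = F j * F i * \prod_(b | (b != i) && (b != j)) F b.
  move=> F i j hij; rewrite (prod2 F j i) 1?eq_sym //; congr (_ * _).
  by apply: eq_bigl => b; rewrite andbC.
have QdE : forall i : 'I_m.+1, Qd X i = \prod_(a < m.+1 | a != i) (x i - x a).
  by move=> i; apply: eq_bigr => b _; rewrite !HX.
have Qsq : forall j : 'I_m.+1, Qd X j * Qd X j = \prod_(k < m.+1 | k != j) (x k - x j) ^+ 2.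
  move=> j; rewrite -expr2 -prodrXl; apply: eq_bigr => k _.
  by rewrite !HX -opprB sqrrN.
have Qjne : forall j : 'I_m.+1, \prod_(k < m.+1 | k != j) (x k - x j) != 0.
  move=> j; rewrite prodf_seq_neq0; apply/allP => k _ /=; apply/implyP => hk.
  exact: xdist.
have detM : \det (C + p *m q) = Dconst d c tau.
  rewrite det_rank1 // mxE.
  rewrite [Z in _ + Z](eq_bigr (fun j : 'I_m.+1 =>
     \sum_i (w i * cofactor C j i * (be * w j)))); last first.
    move=> j _; rewrite !mxE mulr_suml; apply: eq_bigr => i _; rewrite !mxE.
    by [].
  rewrite /Dconst -/x -/a -/kap.
  have PPE : (\prod_(i < m.+1) \prod_(j < m.+1 | (i < j)%N) (x i - x j) ^+ 2) /
      (\prod_(i < m.+1) \prod_(j < m.+1) (x i + x j)) = \det C.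
    rewrite detC /Vp /Hp -expr2 -prodrXl; congr (_ / _).
      apply: eq_bigr => i _; rewrite -prodrXl; apply: eq_bigr => j _.
      by rewrite !HX -opprB sqrrN.
    by apply: eq_bigr => i _; apply: eq_bigr => j _; rewrite !HX.
  rewrite PPE mulrDl mul1r; congr (_ + _).
  rewrite mulr_suml; apply: eq_bigr => j _.
  rewrite (bigD1 j) //= mulrBr mulrBl.
  congr (_ + _).
    rewrite cofE PdE (bigD1 j) //= !HX -[(x j + x j) * Qd X j * Qd X j]mulrA Qsq.
    rewrite !prodrXl /w /be.
    have := Qjne j; have := Hne j j; have := ane j.
    set P1 := \prod_(i < m.+1 | i != j) (x i + x j).
    set Q1 := \prod_(k < m.+1 | k != j) (x k - x j).
    move=> h1 h2 h3.
    by field; rewrite h1 h2 h3.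
  rewrite (mulr_sumr _ _ _ (c * d%:R * kap / a j)) (mulr_suml _ _ _ (\det C)) -sumrN.
  apply: eq_bigr => i hij.
  have hji : j != i by rewrite eq_sym.
  rewrite cofE !PdE' !QdE !HX.
  rewrite (prod2 (fun b => x i + x b) _ _ hij) (prod2' (fun b => x j + x b) _ _ hij).
  rewrite [\prod_(a0 | a0 != i) _](bigD1 j) //= [\prod_(a0 | a0 != j) _](bigD1 i) //=.
  rewrite [\prod_(a0 | (a0 != j) && (a0 != i)) _](eq_bigl (fun b => (b != i) && (b != j)));
    last by move=> b; rewrite andbC.
  rewrite !big_split /= /w /be.
  have hQi : \prod_(l < m.+1 | (l != i) && (l != j)) (x i - x l) != 0.
    rewrite prodf_seq_neq0; apply/allP => l _ /=; apply/implyP => /andP[hl _].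
    by apply: xdist; rewrite eq_sym.
  have hQj : \prod_(l < m.+1 | (l != i) && (l != j)) (x j - x l) != 0.
    rewrite prodf_seq_neq0; apply/allP => l _ /=; apply/implyP => /andP[_ hl].
    by apply: xdist; rewrite eq_sym.
  have h1 := xdist _ _ hij; have h2 := xdist _ _ hji; have h3 := Hne i j.
  have h4 := ane i; have h5 := ane j.
  move: hQi hQj.
  set Qi := \prod_(l < m.+1 | (l != i) && (l != j)) (x i - x l).
  set Qj := \prod_(l < m.+1 | (l != i) && (l != j)) (x j - x l).
  set Pi := \prod_(l < m.+1 | (l != i) && (l != j)) (x i + x l).
  set Pj := \prod_(l < m.+1 | (l != i) && (l != j)) (x j + x l).
  move=> hQi hQj.
  by field; rewrite hQj hQi h2 h4 h5 h1 h3.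
split => hc1.
  have -> : Sigma d V c tau = (V * d%:R * kap / 2) *: (C + p *m q).
    apply/matrixP => i j; rewrite /Sigma hc1 /Sigma_sb /Sigma_sp !mxE big_ord1 !mxE !HX.
    rewrite -/x -/a -/kap /w /be.
    by field; rewrite Hne !ane.
  by rewrite detZ detM mulrC.
have hc1' : (c <= 1) = false by rewrite leNgt hc1.
have cne : c != 0 by rewrite gt_eqF.
have -> : Sigma d V c tau = (V * d%:R * kap / (2 * c)) *: (C + p *m q).
  apply/matrixP => i j; rewrite /Sigma hc1' /Sigma_sb /Sigma_sp !mxE big_ord1 !mxE !HX.
  rewrite -/x -/a -/kap /w /be.
  by field; rewrite Hne !ane cne.
by rewrite detZ detM mulrC.
Qed.
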